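(* Let $(V,\nu)$ and $(W,\mu)$ be strongly complete PN-spaces and let $T:V\to W$ be a linear operator that is continuous with respect to the strong topologies, i.e. $T\in B(V,W)$. If $T$ is surjective, then $T$ is an open mapping: for every strongly open set $U\subseteq V$, the set $T(U)$ is strongly open in $W$.
   Context: A distance distribution function is a map $F:[-\infty,+\infty]\to[0,1]$ that is nondecreasing, left-continuous on $\mathbb{R}$, with $F(-\infty)=0$, $F(+\infty)=1$ and $F(0)=0$; the set of these is $\Delta^+$. $\mathcal{D}^+\subseteq\Delta^+$ denotes the proper ones, i.e. those with $\lim_{x\to+\infty}F(x)=1$. $H_0\in\Delta^+$ is $H_0(x)=0$ for $x\le 0$ and $H_0(x)=1$ for $x>0$. For $F,G\in\Delta^+$ let $\tau_M(F,G)(x)=\sup\{\min(F(s),G(t)) : s+t=x\}$. In this paper a PN-space $(V,\nu)$ is a real vector space $V$ with a map $\nu:V\to\Delta^+$, $p\mapsto\nu_p$, such that for all $p,q\in V$: $\nu_p=H_0$ iff $p=0$; $\nu_{p+q}\ge\tau_M(\nu_p,\nu_q)$ pointwise; and $\nu_{\alpha p}(x)=\nu_p(x/|\alpha|)$ for all real $\alpha\neq0$ and $x\ge 0$. Standing assumption: $\nu_p\in\mathcal{D}^+$ for every $p\in V$. For $x\in V$ and $w\in(0,1)$ put $\|x\|_w=\sup\{t\in\mathbb{R}:\nu_x(t)<w\}$; for each $w$ this is a norm on $V$, and $w\mapsto\|x\|_w$ is nondecreasing. For $p\in V$, $r>0$, $w\in(0,1)$ put $B_w(p;r)=\{x\in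 V:\|x-p\|_w<r\}$. The strong topology on $V$ is generated by the neighbourhoods $N_p(t)=\{q\in V:\nu_{p-q}(t)>1-t\}$, $p\in V$, $t>0$; equivalently the family $\{B_w(p;r)\}$ is a basis for it. A sequence $(p_n)$ converges strongly to $p$ if for every $t>0$ one has $p_n\in N_p(t)$ for all large $n$; it is strongly Cauchy if for every $t>0$ there is $N$ with $\nu_{p_n-p_m}(t)>1-t$ for all $m,n>N$. $(V,\nu)$ is strongly complete if every strongly Cauchy sequence converges strongly. $B(V,W)$ denotes the set of linear operators $V\to W$ that are continuous for the strong topologies (equivalently, map bounded sets to bounded sets). *)

(* Defs.v *)
From Stdlib Require Import Reals.
Open Scope R_scope.

Record RVS := {
  car :> Type;
  vadd : car -> car -> car;
  vscal : R -> car -> car;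
  vzero : car;
  vopp : car -> car;
  vadd_assoc : forall x y z, vadd x (vadd y z) = vadd (vadd x y) z;
  vadd_comm : forall x y, vadd x y = vadd y x;
  vadd_0 : forall x, vadd x vzero = x;
  vadd_opp : forall x, vadd x (vopp x) = vzero;
  vscal_1 : forall x, vscal 1 x = x;
  vscal_assoc : forall a b x, vscal a (vscal b x) = vscal (a * b) x;
  vscal_distr_v : forall a x y, vscal a (vadd x y) = vadd (vscal a x) (vscal a y);
  vscal_distr_s : forall a b x, vscal (a + b) x = vadd (vscal a x) (vscal b x)
}.

Arguments vadd {r}. Arguments vscal {r}. Arguments vzero {r}. Arguments vopp {r}.

Definition vsub {V : RVS} (x y : V) : V := vadd x (vopp y).

(** An element F of Delta^+ is a map on
    [-oo,+oo]; since F(-oo)=0 and F(+oo)=1 are fixed, it is determined by its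
    restriction to R, which is what we store (a function R -> R). *)
Definition is_ddf (F : R -> R) : Prop :=
  (forall x, 0 <= F x <= 1) /\
  (forall x y, x <= y -> F x <= F y) /\
  (forall x eps, 0 < eps -> exists delta, 0 < delta /\
       forall y, x - delta < y <= x -> Rabs (F y - F x) < eps) /\
  F 0 = 0.

Definition is_proper_ddf (F : R -> R) : Prop :=
  is_ddf F /\
  forall eps, 0 < eps -> exists M, forall x, M < x -> Rabs (F x - 1) < eps.

Definition H0 (x : R) : R := if Rle_dec x 0 then 0 else 1.

(** nu_{p+q} >= tau_M(nu_p, nu_q) pointwise on R; for x real,
    tau_M(F,G)(x) = sup{min(F s, G t) : s + t = x}, and "a >= sup S" is
    literally "a is an upper bound of S". *)
Definition tauM_le (F G H : R -> R) : Prop :=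
  forall x s t, s + t = x -> Rmin (F s) (G t) <= H x.

(** PN-space (with the standing assumption that every nu_p is proper). *)
Definition is_PN (V : RVS) (nu : V -> R -> R) : Prop :=
  (forall p, is_proper_ddf (nu p)) /\
  (forall p, (forall x, nu p x = H0 x) <-> p = vzero) /\
  (forall p q, tauM_le (nu p) (nu q) (nu (vadd p q))) /\
  (forall (a : R) p x, a <> 0 -> 0 <= x -> nu (vscal a p) x = nu p (x / Rabs a)).

Definition Nbhd {V : RVS} (nu : V -> R -> R) (p : V) (t : R) (q : V) : Prop :=
  nu (vsub p q) t > 1 - t.

Definition strongly_open {V : RVS} (nu : V -> R -> R) (U : V -> Prop) : Prop :=
  forall p, U p -> exists t, 0 < t /\ forall q, Nbhd nu p t q -> U q.

Definition strongly_converges {V : RVS} (nu : V -> R -> R)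
  (pn : nat -> V) (p : V) : Prop :=
  forall t, 0 < t -> exists N, forall n, (n >= N)%nat -> Nbhd nu p t (pn n).

Definition strongly_Cauchy {V : RVS} (nu : V -> R -> R) (pn : nat -> V) : Prop :=
  forall t, 0 < t -> exists N, forall m n, (m > N)%nat -> (n > N)%nat ->
    nu (vsub (pn n) (pn m)) t > 1 - t.

Definition strongly_complete {V : RVS} (nu : V -> R -> R) : Prop :=
  forall pn, strongly_Cauchy nu pn -> exists p, strongly_converges nu pn p.

Definition is_linear {V W : RVS} (T : V -> W) : Prop :=
  (forall x y, T (vadd x y) = vadd (T x) (T y)) /\
  (forall (a : R) x, T (vscal a x) = vscal a (T x)).

Definition strongly_continuous {V W : RVS} (nu : V -> R -> R) (mu : W -> R -> R)
  (T : V -> W) : Prop :=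
  forall U, strongly_open mu U -> strongly_open nu (fun x => U (T x)).

Definition in_B {V W : RVS} (nu : V -> R -> R) (mu : W -> R -> R) (T : V -> W) : Prop :=
  is_linear T /\ strongly_continuous nu mu T.

Definition image {V W : RVS} (T : V -> W) (U : V -> Prop) : W -> Prop :=
  fun y => exists x, U x /\ T x = y.

(* Main.v *)
Require Import Defs.
From Stdlib Require Import Reals Lra Lia Classical ClassicalEpsilon.
Open Scope R_scope.


Lemma vadd_0l (V : RVS) (x : V) : vadd vzero x = x.
Proof. rewrite vadd_comm; apply vadd_0. Qed.
Lemma vadd_oppl (V : RVS) (x : V) : vadd (vopp x) x = vzero.
Proof. rewrite vadd_comm; apply vadd_opp. Qed.
Lemma vadd_lcomm (V : RVS) (a b c : V) : vadd a (vadd b c) = vadd b (vadd a c).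
Proof. rewrite !vadd_assoc, (vadd_comm V a b); reflexivity. Qed.
Lemma vadd_cancel_l (V : RVS) (a x y : V) : vadd a x = vadd a y -> x = y.
Proof.
  intro H. rewrite <- (vadd_0l V x), <- (vadd_0l V y), <- (vadd_oppl V a).
  rewrite <- !vadd_assoc, H; reflexivity.
Qed.
Lemma vopp_unique (V : RVS) (x y : V) : vadd x y = vzero -> y = vopp x.
Proof. intro H. apply (vadd_cancel_l V x). rewrite H, vadd_opp; reflexivity. Qed.
Lemma vopp_vopp (V : RVS) (x : V) : vopp (vopp x) = x.
Proof. symmetry; apply vopp_unique; apply vadd_oppl. Qed.
Lemma vopp_vadd (V : RVS) (x y : V) : vopp (vadd x y) = vadd (vopp x) (vopp y).
Proof.
  symmetry; apply vopp_unique.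
  rewrite vadd_assoc, (vadd_comm V x y), <- (vadd_assoc V y x), vadd_opp, vadd_0, vadd_opp.
  reflexivity.
Qed.
Lemma vopp_zero (V : RVS) : vopp (@vzero V) = vzero.
Proof. symmetry; apply vopp_unique; apply vadd_0. Qed.
Lemma vscal_0 (V : RVS) (x : V) : vscal 0 x = vzero.
Proof.
  apply (vadd_cancel_l V (vscal 0 x)). rewrite <- vscal_distr_s, vadd_0.
  rewrite Rplus_0_l; reflexivity.
Qed.
Lemma vscal_m1 (V : RVS) (x : V) : vscal (-1) x = vopp x.
Proof.
  apply vopp_unique. rewrite <- (vscal_1 V x) at 1. rewrite <- vscal_distr_s.
  replace (1 + -1) with 0 by ring. apply vscal_0.
Qed.
Lemma vscal_opp (V : RVS) (a : R) (x : V) : vscal a (vopp x) = vopp (vscal a x).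
Proof. rewrite <- !vscal_m1, !vscal_assoc, Rmult_comm; reflexivity. Qed.
Lemma vscal_sub (V : RVS) (a : R) (x y : V) : vscal a (vsub x y) = vsub (vscal a x) (vscal a y).
Proof. unfold vsub; rewrite vscal_distr_v, vscal_opp; reflexivity. Qed.
Lemma vsub_vv (V : RVS) (x : V) : vsub x x = vzero.
Proof. apply vadd_opp. Qed.
Lemma vsub_0 (V : RVS) (x : V) : vsub x vzero = x.
Proof. unfold vsub; rewrite vopp_zero; apply vadd_0. Qed.
Lemma vsub_0l (V : RVS) (x : V) : vsub vzero x = vopp x.
Proof. apply vadd_0l. Qed.
Lemma vopp_vsub (V : RVS) (a b : V) : vopp (vsub a b) = vsub b a.
Proof. unfold vsub; rewrite vopp_vadd, vopp_vopp, vadd_comm; reflexivity. Qed.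
Lemma vsub_eq0 (V : RVS) (a b : V) : vsub a b = vzero -> a = b.
Proof. intro H. apply vopp_unique in H. rewrite <- (vopp_vopp V a), <- H, vopp_vopp. reflexivity. Qed.
Lemma vsub_chain (V : RVS) (a b c : V) : vsub a c = vadd (vsub a b) (vsub b c).
Proof.
  unfold vsub. rewrite <- vadd_assoc. f_equal.
  rewrite vadd_assoc, vadd_oppl, vadd_0l; reflexivity.
Qed.
Lemma vsub_vsub_cancel (V : RVS) (a b : V) : vsub a (vsub a b) = b.
Proof.
  unfold vsub. rewrite vopp_vadd, vopp_vopp, vadd_assoc, vadd_opp, vadd_0l; reflexivity.
Qed.
Lemma vsub_vadd_cancel (V : RVS) (a x : V) : vsub a (vadd a x) = vopp x.
Proof.
  unfold vsub. rewrite vopp_vadd, vadd_assoc, vadd_opp, vadd_0l; reflexivity.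
Qed.
Lemma vsub_add_cancel (V : RVS) (q w : V) : vadd (vsub q w) w = q.
Proof. unfold vsub. rewrite <- vadd_assoc, vadd_oppl, vadd_0; reflexivity. Qed.
Lemma vsub_vadd (V : RVS) (y u v : V) : vsub y (vadd u v) = vsub (vsub y u) v.
Proof. unfold vsub. rewrite vopp_vadd, vadd_assoc; reflexivity. Qed.
Lemma vsub_vsub (V : RVS) (q p r : V) : vsub q (vsub p r) = vadd (vsub q p) r.
Proof. unfold vsub. rewrite vopp_vadd, vopp_vopp, vadd_assoc; reflexivity. Qed.
Lemma vsub_G1 (V : RVS) (c p q r : V) :
  vsub (vsub c p) (vsub (vsub c q) r) = vadd (vsub q p) r.
Proof.
  rewrite vsub_vsub. f_equal. unfold vsub. rewrite vopp_vadd, vopp_vopp.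
  rewrite <- vadd_assoc, (vadd_lcomm V (vopp p)), vadd_assoc, vadd_opp, vadd_0l.
  apply vadd_comm.
Qed.

Lemma lin_zero (V W : RVS) (T : V -> W) : is_linear T -> T vzero = vzero.
Proof.
  intros [Ha _]. apply (vadd_cancel_l W (T vzero)). rewrite <- Ha, !vadd_0; reflexivity.
Qed.
Lemma lin_opp (V W : RVS) (T : V -> W) (x : V) : is_linear T -> T (vopp x) = vopp (T x).
Proof. intros [Ha Hs]. rewrite <- !vscal_m1, Hs; reflexivity. Qed.
Lemma lin_sub (V W : RVS) (T : V -> W) (x y : V) : is_linear T -> T (vsub x y) = vsub (T x) (T y).
Proof. intros HT. unfold vsub. rewrite (proj1 HT), lin_opp; auto. Qed.

Definition Psm {V : RVS} (nu : V -> R -> R) (x : V) (t : R) : Prop := nu x t > 1 - t.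

Lemma P_zero (V : RVS) nu (HV : is_PN V nu) t : 0 < t -> Psm nu (@vzero V) t.
Proof.
  intro Ht. destruct HV as [_ [H2 _]]. unfold Psm.
  rewrite (proj2 (H2 vzero) eq_refl t). unfold H0. destruct (Rle_dec t 0); lra.
Qed.

Lemma nu_mono (V : RVS) nu (HV : is_PN V nu) x s t : s <= t -> nu x s <= nu x t.
Proof. intro H. destruct HV as [H1 _]. destruct (H1 x) as [[_ [Hm _]] _]. auto. Qed.

Lemma nu_bounds (V : RVS) nu (HV : is_PN V nu) x s : 0 <= nu x s <= 1.
Proof. destruct HV as [H1 _]. destruct (H1 x) as [[Hb _] _]. auto. Qed.

Lemma P_mono (V : RVS) nu (HV : is_PN V nu) x s t : s <= t -> Psm nu x s -> Psm nu x t.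
Proof. unfold Psm; intros H1 H2. pose proof (nu_mono V nu HV x s t H1). lra. Qed.

Lemma P_add (V : RVS) nu (HV : is_PN V nu) x y s t : 0 < s -> 0 < t ->
  Psm nu x s -> Psm nu y t -> Psm nu (vadd x y) (s + t).
Proof.
  unfold Psm; intros Hs Ht H1 H2. destruct HV as [_ [_ [H3 _]]].
  pose proof (H3 x y (s + t) s t eq_refl).
  unfold Rmin in H; destruct (Rle_dec (nu x s) (nu y t)); lra.
Qed.

Lemma P_scal_le1 (V : RVS) nu (HV : is_PN V nu) a x t : Rabs a <= 1 -> 0 < t ->
  Psm nu x t -> Psm nu (vscal a x) t.
Proof.
  intros Ha Ht H. destruct (Req_dec a 0) as [->|Ha0].
  - rewrite vscal_0. apply P_zero; auto.
  - unfold Psm in *. destruct HV as [HV1 [HV2 [HV3 HV4]]].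
    rewrite HV4 by lra.
    assert (0 < Rabs a) by (apply Rabs_pos_lt; auto).
    assert (t <= t / Rabs a).
    { apply (Rmult_le_reg_r (Rabs a)); auto. field_simplify; try lra. nra. }
    pose proof (nu_mono V nu (conj HV1 (conj HV2 (conj HV3 HV4))) x _ _ H1). lra.
Qed.

Lemma P_opp (V : RVS) nu (HV : is_PN V nu) x t : 0 < t -> Psm nu x t -> Psm nu (vopp x) t.
Proof.
  intros. rewrite <- vscal_m1. apply P_scal_le1; auto. rewrite Rabs_left by lra; lra.
Qed.

Lemma P_sub_sym (V : RVS) nu (HV : is_PN V nu) a b t : 0 < t -> Psm nu (vsub a b) t -> Psm nu (vsub b a) t.
Proof. intros. rewrite <- vopp_vsub. apply P_opp; auto. Qed.

Lemma P_scal_ge1 (V : RVS) nu (HV : is_PN V nu) a x s : 1 <= a -> 0 < s ->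
  Psm nu x (s / a) -> Psm nu (vscal a x) s.
Proof.
  intros Ha Hs H. unfold Psm in *. destruct HV as [_ [_ [_ HV4]]].
  rewrite HV4 by lra. rewrite Rabs_right by lra.
  assert (s / a <= s).
  { apply (Rmult_le_reg_r a); [lra|]. field_simplify; nra. }
  lra.
Qed.

Lemma P_haus (V : RVS) nu (HV : is_PN V nu) x : (forall t, 0 < t -> Psm nu x t) -> x = vzero.
Proof.
  intros H. destruct HV as [HV1 [HV2 HV3]].
  apply (HV2 x). intro z. unfold H0.
  pose proof (nu_bounds V nu (conj HV1 (conj HV2 HV3)) x z) as Hb.
  destruct (Rle_dec z 0).
  - pose proof (nu_mono V nu (conj HV1 (conj HV2 HV3)) x z 0 r).
    destruct (HV1 x) as [[_ [_ [_ H0']]] _]. lra.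
  - destruct (Rlt_dec (nu x z) 1) as [Hl|Hl]; [|lra].
    exfalso. set (t := Rmin z (1 - nu x z) / 2).
    assert (0 < t) by (unfold t, Rmin; destruct Rle_dec; lra).
    assert (t <= z) by (unfold t, Rmin; destruct Rle_dec; lra).
    assert (t < 1 - nu x z) by (unfold t, Rmin; destruct Rle_dec; lra).
    pose proof (H t H0). unfold Psm in H3.
    pose proof (nu_mono V nu (conj HV1 (conj HV2 HV3)) x t z H1). lra.
Qed.

Lemma P_absorb (V : RVS) nu (HV : is_PN V nu) x t : 0 < t ->
  exists n : nat, Psm nu (vscal (/ INR (S n)) x) t.
Proof.
  intro Ht. destruct HV as [HV1 [_ [_ HV4]]].
  destruct (HV1 x) as [_ Hp]. destruct (Hp t Ht) as [M HM].
  destruct (INR_unbounded (M / t)) as [n Hn].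
  exists n. unfold Psm. assert (0 < INR (S n)) by (apply lt_0_INR; lia).
  rewrite HV4; [| apply Rinv_neq_0_compat; lra | lra].
  rewrite Rabs_right by (apply Rle_ge; apply Rlt_le; apply Rinv_0_lt_compat; lra).
  assert (M < t / / INR (S n)).
  { rewrite S_INR in *. unfold Rdiv in *. rewrite Rinv_inv.
    apply (Rmult_lt_reg_r (/t)); [apply Rinv_0_lt_compat; lra|].
    replace (t * (INR n + 1) * / t) with (INR n + 1) by (field; lra). lra. }
  specialize (HM _ H0). apply Rabs_def2 in HM. lra.
Qed.

Lemma half_pow_small e : 0 < e -> exists M, forall n, (n >= M)%nat -> (1/2)^n < e.
Proof.
  intro He. destruct (pow_lt_1_zero (1/2)) with (y := e) as [M HM]; auto.
  - rewrite Rabs_right; lra.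
  - exists M. intros n Hn. specialize (HM n Hn). rewrite Rabs_right in HM; auto.
    apply Rle_ge, pow_le; lra.
Qed.

Lemma geom_bound (r : nat -> R) : (forall k, r (S k) <= r k / 2) ->
  forall m, r m <= r 0%nat * (1/2)^m.
Proof.
  intros H m; induction m; simpl.
  - lra.
  - specialize (H m). lra.
Qed.

Lemma dec_seq (r : nat -> R) : (forall k, 0 < r k) -> (forall k, r (S k) <= r k / 2) ->
  forall a b, (a < b)%nat -> r b < r a.
Proof.
  intros Hp Hh a b Hab. induction Hab.
  - specialize (Hh a); specialize (Hp a); lra.
  - specialize (Hh m); specialize (Hp m); lra.
Qed.

Lemma G_seq (V : RVS) nu (HV : is_PN V nu) (s : nat -> V) (r : nat -> R) :
  (forall k, 0 < r k) -> (forall k, r (S k) <= r k / 2) ->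
  (forall k, Psm nu (vsub (s k) (s (S k))) (r k)) ->
  forall m n, (m < n)%nat -> Psm nu (vsub (s m) (s n)) (2 * r m).
Proof.
  intros Hp Hh Hs m n Hmn.
  assert (Hj : forall j, Psm nu (vsub (s m) (s (m + S j)%nat)) (2 * r m - 2 * r (m + S j)%nat)).
  { induction j.
    - replace (m + 1)%nat with (S m) by lia. eapply P_mono; eauto.
      specialize (Hh m). lra.
    - replace (m + S (S j))%nat with (S (m + S j)) by lia.
      rewrite (vsub_chain V _ (s (m + S j)%nat)).
      pose proof (dec_seq r Hp Hh m (m + S j)%nat ltac:(lia)).
      eapply P_mono; [eauto| |apply (P_add V nu HV); [| | exact IHj | exact (Hs _)]].
      + specialize (Hh (m + S j)%nat). lra.
      + lra.
      + apply Hp. }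
  destruct n as [|n']; [lia|].
  replace (S n') with (m + S (n' - m))%nat in * by lia.
  eapply P_mono; [eauto| |apply Hj]. specialize (Hp (m + S (n' - m))%nat). lra.
Qed.

Lemma G_cauchy (V : RVS) nu (HV : is_PN V nu) (s : nat -> V) (r : nat -> R) :
  (forall k, 0 < r k) -> (forall k, r (S k) <= r k / 2) ->
  (forall k, Psm nu (vsub (s k) (s (S k))) (r k)) ->
  strongly_Cauchy nu s.
Proof.
  intros Hp Hh Hs e He.
  assert (0 < r 0%nat) by apply Hp.
  destruct (half_pow_small (e / (2 * r 0%nat))) as [N HN].
  { apply Rdiv_lt_0_compat; lra. }
  exists N. intros m n Hm Hn.
  assert (Hb : forall k, (k > N)%nat -> 2 * r k <= e).
  { intros k Hk. pose proof (geom_bound r Hh k). specialize (HN k ltac:(lia)).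
    assert (Hq : r 0%nat * (1/2)^k < r 0%nat * (e / (2 * r 0%nat))) by (apply Rmult_lt_compat_l; lra).
    replace (r 0%nat * (e / (2 * r 0%nat))) with (e/2) in Hq by (field; lra). lra. }
  destruct (Nat.lt_total n m) as [Hl|[Heq|Hl]].
  - eapply P_mono; [eauto| apply (Hb n Hn) |]. apply (G_seq V nu HV s r Hp Hh Hs); auto.
  - subst. rewrite vsub_vv. apply P_zero; auto.
  - apply P_sub_sym; auto. eapply P_mono; [eauto| apply (Hb m Hm) |].
    apply (G_seq V nu HV s r Hp Hh Hs); auto.
Qed.

Lemma G_limit (V : RVS) nu (HV : is_PN V nu) (s : nat -> V) (r : nat -> R) L :
  (forall k, 0 < r k) -> (forall k, r (S k) <= r k / 2) ->
  (forall k, Psm nu (vsub (s k) (s (S k))) (r k)) ->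
  strongly_converges nu s L ->
  forall m d, 0 < d -> Psm nu (vsub (s m) L) (2 * r m + d).
Proof.
  intros Hp Hh Hs Hc m d Hd.
  destruct (Hc d Hd) as [N HN].
  set (n := max N (S m)).
  specialize (HN n ltac:(unfold n; lia)). unfold Nbhd in HN.
  rewrite (vsub_chain V _ (s n)). pose proof (Hp m) as Hpm.
  apply (P_add V nu HV); try lra.
  - apply (G_seq V nu HV s r); auto. unfold n; lia.
  - apply P_sub_sym; auto.
Qed.

Lemma cont_at0 (V W : RVS) nu mu (HV : is_PN V nu) (HW : is_PN W mu) (T : V -> W)
  (HT : in_B nu mu T) e : 0 < e ->
  exists d, 0 < d /\ forall v, Psm nu v d -> Psm mu (T v) e.
Proof.
  intro He. destruct HT as [HL Hc].
  set (U := fun w : W => exists s, 0 < s /\ s < e /\ Psm mu w s).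
  assert (HU : strongly_open mu U).
  { intros w [s [Hs1 [Hs2 Hw]]]. exists ((e - s) / 2). split; [lra|].
    intros q Hq. unfold Nbhd in Hq. exists (s + (e - s)/2). split; [lra|]. split; [lra|].
    rewrite <- (vsub_add_cancel W q w). rewrite Rplus_comm. apply P_add; auto; try lra.
    apply P_sub_sym; auto; lra. }
  destruct (Hc U HU vzero) as [d [Hd Hq]].
  { rewrite (lin_zero V W T HL). exists (e/2). repeat split; try lra. apply P_zero; auto; lra. }
  exists d. split; auto. intros v Hv.
  destruct (Hq v) as [s [Hs1 [Hs2 Hs3]]].
  { unfold Nbhd. rewrite vsub_0l. apply P_opp; auto. }
  eapply P_mono; eauto; lra.
Qed.

Lemma baire (W : RVS) mu (HW : is_PN W mu) (cW : strongly_complete mu)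
  (A : nat -> W -> Prop) :
  (forall n w, (forall e, 0 < e -> exists z, A n z /\ Psm mu (vsub w z) e) -> A n w) ->
  (forall w, exists n, A n w) ->
  exists n w0 rho, 0 < rho /\ forall w, Psm mu (vsub w0 w) rho -> A n w.
Proof.
  intros Hcl Hcov. apply NNPP. intro Hno.
  assert (H : forall n w0 rho, exists p : W * R, 0 < rho ->
     Psm mu (vsub w0 (fst p)) rho /\ 0 < snd p /\
     forall z, Psm mu (vsub (fst p) z) (snd p) -> ~ A n z).
  { intros n w0 rho. destruct (Rlt_dec 0 rho) as [Hr|Hr].
    2:{ exists (vzero, 1). intro; lra. }
    assert (Hw : exists w, Psm mu (vsub w0 w) rho /\ ~ A n w).
    { apply NNPP; intro C. apply Hno. exists n, w0, rho. split; auto.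
      intros w Hw. apply NNPP. intro Ha. apply C. exists w. auto. }
    destruct Hw as [w [Hw1 Hw2]].
    assert (He : exists e, 0 < e /\ forall z, Psm mu (vsub w z) e -> ~ A n z).
    { apply NNPP; intro C. apply Hw2. apply Hcl. intros e He.
      apply NNPP; intro C2. apply C. exists e. split; auto.
      intros z Hz Hz2. apply C2. exists z; auto. }
    destruct He as [e [He1 He2]]. exists (w, e). intros _. simpl. auto. }
  set (g := fun n w0 rho => proj1_sig (constructive_indefinite_description _ (H n w0 rho))).
  assert (Hg : forall n w0 rho, 0 < rho ->
     Psm mu (vsub w0 (fst (g n w0 rho))) rho /\ 0 < snd (g n w0 rho) /\
     forall z, Psm mu (vsub (fst (g n w0 rho)) z) (snd (g n w0 rho)) -> ~ A n z).
  { intros n w0 rho. unfold g. destruct (constructive_indefinite_description _ _) as [p Hp]. exact Hp. }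
  clearbody g.
  set (st := fix st (k : nat) : W * R := match k with
     | O => (vzero, 1)
     | S k => let p := g k (fst (st k)) (snd (st k) / 2) in
              (fst p, Rmin (snd p / 2) (snd (st k) / 2)) end).
  assert (Hpos : forall k, 0 < snd (st k)).
  { induction k; simpl; [lra|]. destruct (Hg k (fst (st k)) (snd (st k) / 2)) as [_ [Hp _]]; [lra|].
    unfold Rmin; destruct Rle_dec; lra. }
  set (r := fun k => snd (st k) / 2).
  set (w := fun k => fst (st k)).
  assert (Hr : forall k, 0 < r k) by (intro k; unfold r; specialize (Hpos k); lra).
  assert (Hh : forall k, r (S k) <= r k / 2).
  { intro k. unfold r. simpl. unfold Rmin; destruct Rle_dec; lra. }
  assert (Hs : forall k, Psm mu (vsub (w k) (w (S k))) (r k)).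
  { intro k. unfold w, r. simpl. apply Hg. specialize (Hpos k); lra. }
  destruct (cW w (G_cauchy W mu HW w r Hr Hh Hs)) as [L HL].
  destruct (Hcov L) as [n Hn].
  destruct (Hg n (w n) (snd (st n) / 2)) as [_ [He Hz]]; [specialize (Hpos n); lra|].
  apply (Hz L); auto.
  pose proof (G_limit W mu HW w r L Hr Hh Hs HL (S n) (snd (g n (w n) (snd (st n) / 2)) / 2)) as HG.
  assert (Hmin : 2 * r (S n) <= snd (g n (w n) (snd (st n) / 2)) / 2).
  { unfold r. simpl. unfold Rmin; destruct Rle_dec; unfold w; lra. }
  eapply P_mono; [eauto| | apply HG; lra]. lra.
Qed.

Lemma lemmaA (V W : RVS) nu mu (HV : is_PN V nu) (HW : is_PN W mu)
  (cW : strongly_complete mu) (T : V -> W) (HL : is_linear T)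
  (Hsurj : forall y : W, exists x : V, T x = y) t : 0 < t ->
  exists r, 0 < r /\ forall y, Psm mu y r -> forall e, 0 < e ->
    exists x, Psm nu x t /\ Psm mu (vsub y (T x)) e.
Proof.
  intro Ht.
  set (A := fun n w => forall e, 0 < e -> exists x, Psm nu x (t/2) /\
              Psm mu (vsub w (vscal (INR (S n)) (T x))) e).
  destruct (baire W mu HW cW A) as [n [w0 [rho [Hrho Hball]]]].
  - intros n w Hw e He. destruct (Hw (e/2)) as [z [Hz1 Hz2]]; [lra|].
    destruct (Hz1 (e/2)) as [x [Hx1 Hx2]]; [lra|].
    exists x. split; auto. rewrite (vsub_chain W _ z). replace e with (e/2 + e/2) by lra.
    apply P_add; auto; lra.
  - intro w. destruct (Hsurj w) as [x0 <-].
    destruct (P_absorb V nu HV x0 (t/2)) as [n Hn]; [lra|].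
    exists n. intros e He. exists (vscal (/ INR (S n)) x0). split; auto.
    rewrite (proj2 HL), vscal_assoc, Rinv_r, vscal_1, vsub_vv.
    + apply P_zero; auto.
    + apply not_0_INR; lia.
  - set (N := INR (S n)). assert (HN : 1 <= N) by (unfold N; rewrite S_INR; pose proof (pos_INR n); lra).
    exists (rho / N). split; [apply Rdiv_lt_0_compat; lra|].
    intros y Hy e He.
    assert (A0 : A n w0) by (apply Hball; rewrite vsub_vv; apply P_zero; auto).
    assert (A1 : A n (vsub w0 (vscal N y))).
    { apply Hball. rewrite vsub_vsub_cancel. apply P_scal_ge1; auto. }
    destruct (A0 (e/2)) as [x1 [Hx1 Ha]]; [lra|].
    destruct (A1 (e/2)) as [x2 [Hx2 Hb]]; [lra|].
    exists (vsub x1 x2). split.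
    + unfold vsub. replace t with (t/2 + t/2) by lra. apply P_add; try lra; auto.
      apply P_opp; auto; lra.
    + rewrite (lin_sub V W T x1 x2 HL).
      assert (HNpos : 0 < N) by lra.
      rewrite (vsub_vsub W), <- (vscal_1 W (vadd _ _)), <- (Rinv_l N) by lra.
      rewrite <- vscal_assoc, vscal_distr_v, vscal_sub, <- vsub_G1 with (c := w0).
      apply P_scal_le1; auto.
      * rewrite Rabs_right; [| apply Rle_ge, Rlt_le, Rinv_0_lt_compat; lra].
        rewrite <- Rinv_1. apply Rinv_le_contravar; lra.
      * unfold vsub at 1. replace e with (e/2 + e/2) by lra. apply P_add; try lra; auto.
        apply P_opp; auto; lra.
Qed.

Lemma lemmaB (V W : RVS) nu mu (HV : is_PN V nu) (HW : is_PN W mu)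
  (cV : strongly_complete nu) (cW : strongly_complete mu) (T : V -> W) (HT : in_B nu mu T)
  (Hsurj : forall y : W, exists x : V, T x = y) t : 0 < t ->
  exists r, 0 < r /\ forall y, Psm mu y r -> exists x, Psm nu x (2 * t) /\ T x = y.
Proof.
  intro Ht. pose proof (proj1 HT) as HL.
  set (tk := fun k : nat => t * (1/2)^(S k)).
  assert (Htk : forall k, 0 < tk k).
  { intro k. unfold tk. apply Rmult_lt_0_compat; auto. apply pow_lt; lra. }
  assert (Hr : forall k, exists r, 0 < r /\ r <= tk k /\ forall y, Psm mu y r -> forall e, 0 < e ->
     exists x, Psm nu x (tk k) /\ Psm mu (vsub y (T x)) e).
  { intro k. destruct (lemmaA V W nu mu HV HW cW T HL Hsurj (tk k) (Htk k)) as [r [Hr1 Hr2]].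
    exists (Rmin r (tk k)). split; [apply Rmin_pos; auto|].
    split; [apply Rmin_r|]. intros y Hy. apply Hr2. exact (P_mono W mu HW y _ _ (Rmin_l _ _) Hy). }
  set (rf := fun k => proj1_sig (constructive_indefinite_description _ (Hr k))).
  assert (Hrf : forall k, 0 < rf k /\ rf k <= tk k /\ forall y, Psm mu y (rf k) -> forall e, 0 < e ->
     exists x, Psm nu x (tk k) /\ Psm mu (vsub y (T x)) e).
  { intro k. unfold rf. destruct (constructive_indefinite_description _ _) as [r Hp]. exact Hp. }
  clearbody rf.
  assert (Hstep : forall k e, exists x, Psm mu e (rf k) ->
     Psm nu x (tk k) /\ Psm mu (vsub e (T x)) (rf (S k))).
  { intros k e. destruct (classic (Psm mu e (rf k))) as [He|He].
    - destruct (Hrf k) as [_ [_ H3]]. destruct (H3 e He (rf (S k))) as [x Hx]; [apply Hrf|].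
      exists x; auto.
    - exists vzero; intro; contradiction. }
  set (f := fun k e => proj1_sig (constructive_indefinite_description _ (Hstep k e))).
  assert (Hf : forall k e, Psm mu e (rf k) ->
     Psm nu (f k e) (tk k) /\ Psm mu (vsub e (T (f k e))) (rf (S k))).
  { intros k e. unfold f. destruct (constructive_indefinite_description _ _) as [x Hp]. exact Hp. }
  clearbody f.
  exists (rf 0%nat). split; [apply Hrf|]. intros y Hy.
  set (sq := fix sq (k : nat) : W * V := match k with
     | O => (y, vzero)
     | S k => (vsub (fst (sq k)) (T (f k (fst (sq k)))), vadd (snd (sq k)) (f k (fst (sq k)))) end).
  set (e := fun k => fst (sq k)). set (s := fun k => snd (sq k)).
  assert (Inv1 : forall k, Psm mu (e k) (rf k)).
  { induction k; [exact Hy|]. unfold e in *. simpl. apply Hf. auto. }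
  assert (Inv2 : forall k, e k = vsub y (T (s k))).
  { induction k.
    - unfold e, s; simpl. rewrite (lin_zero V W T HL), vsub_0. reflexivity.
    - unfold e, s in *; simpl. rewrite IHk, (proj1 HL), vsub_vadd. reflexivity. }
  assert (Hs : forall k, Psm nu (vsub (s k) (s (S k))) (tk k)).
  { intro k. unfold s; simpl. rewrite vsub_vadd_cancel. apply P_opp; auto. apply Hf. apply Inv1. }
  assert (Hh : forall k, tk (S k) <= tk k / 2).
  { intro k. unfold tk. simpl. lra. }
  destruct (cV s (G_cauchy V nu HV s tk Htk Hh Hs)) as [x Hx].
  exists x. split.
  - pose proof (G_limit V nu HV s tk x Htk Hh Hs Hx 0%nat t Ht) as HG.
    replace (s 0%nat) with (@vzero V) in HG by reflexivity.
    rewrite vsub_0l in HG. apply P_opp in HG; [| auto | unfold tk in *; specialize (Htk 0%nat); lra].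
    rewrite vopp_vopp in HG. eapply P_mono; [eauto| |exact HG]. unfold tk; simpl; lra.
  - apply vsub_eq0. apply (P_haus W mu HW). intros ep Hep.
    destruct (cont_at0 V W nu mu HV HW T HT (ep/2)) as [d [Hd Hcd]]; [lra|].
    destruct (Hx d Hd) as [N HN].
    destruct (half_pow_small (ep / (2 * t))) as [M HM]; [apply Rdiv_lt_0_compat; lra|].
    set (n := max N M).
    rewrite (vsub_chain W _ (T (s n))). replace ep with (ep/2 + ep/2) by lra.
    apply P_add; auto; try lra.
    + rewrite <- (lin_sub V W T _ _ HL). apply Hcd. apply HN. unfold n; lia.
    + apply P_sub_sym; auto; [lra|]. rewrite <- Inv2.
      destruct (Hrf n) as [_ [Hle _]].
      eapply P_mono; [eauto| |apply Inv1].
      specialize (HM n ltac:(unfold n; lia)).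
      assert (Hq : t * (1/2)^n < t * (ep / (2 * t))) by (apply Rmult_lt_compat_l; lra).
      replace (t * (ep / (2 * t))) with (ep/2) in Hq by (field; lra).
      unfold tk in Hle. simpl in Hle.
      assert (0 < (1/2)^n) by (apply pow_lt; lra). lra.
Qed.

Theorem theorem4p5 (V W : RVS) (nu : V -> R -> R) (mu : W -> R -> R)
  (HV : is_PN V nu) (HW : is_PN W mu)
  (cV : strongly_complete nu) (cW : strongly_complete mu)
  (T : V -> W) (HT : in_B nu mu T)
  (Hsurj : forall y : W, exists x : V, T x = y) :
  forall U : V -> Prop, strongly_open nu U -> strongly_open mu (image T U).
Proof.
  intros U HU y [x0 [Hx0 <-]].
  destruct (HU x0 Hx0) as [t [Ht Hball]].
  destruct (lemmaB V W nu mu HV HW cV cW T HT Hsurj (t/2)) as [r [Hr HB]]; [lra|].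
  exists r. split; auto. intros q Hq. unfold Nbhd in Hq.
  destruct (HB _ Hq) as [x [Hx HTx]].
  exists (vsub x0 x). split.
  - apply Hball. unfold Nbhd. rewrite vsub_vsub_cancel. replace t with (2 * (t/2)) by lra. exact Hx.
  - rewrite (lin_sub V W T _ _ (proj1 HT)), HTx, vsub_vsub_cancel. reflexivity.
Qed.
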